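(* Let $c\in\mathsf{ACirc}[0,0]$. Then $[\![c]\!]=\mathrm{id}_0$ (that is, $\{(\bullet,\bullet)\}$) if and only if $c\uparrow$.
   Context: Fix a field $k$. Circuits: terms built from generators with sorts $(n,m)$: copier $\Delta:(1,2)$, discard $!:(1,0)$, amplifier $\mathsf{s}_r:(1,1)$ ($r\in k$), register $\mathsf{x}:(1,1)$, adder $+:(2,1)$, zero $0:(0,1)$, one $\mathbf{1}:(0,1)$; mirror images $\Delta^{op}:(2,1)$, $!^{op}:(0,1)$, $\mathsf{s}_r^{op}$, $\mathsf{x}^{op}:(1,1)$, $+^{op}:(1,2)$, $0^{op}:(1,0)$, $\mathbf{1}^{op}:(1,0)$; $\mathrm{id}_0:(0,0),\mathrm{id}_1:(1,1),\mathrm{sw}:(2,2)$; closed under $;$ and $\oplus$; $\mathsf{ACirc}[n,m]$: circuits of sort $(n,m)$. Denotation over the field $k(x)$ of polynomial fractions: $[\![\Delta]\!]=\{(p,(p,p))\}$, $[\![!]\!]=\{(p,\bullet)\}$, $[\![+]\!]=\{((p,q),p+q)\}$, $[\![0]\!]=\{(\bullet,0)\}$, $[\![\mathbf 1]\!]=\{(\bullet,1)\}$, $[\![\mathsf s_r]\!]=\{(p,rp)\}$, $[\![\mathsf x]\!]=\{(p,px)\}$ ($\bullet$ the unique element of $k(x)^0$); mirrored generators denote converse relations; structural generators denote identity, swap, $\{(\bullet,\bullet)\}$; $;$ is relational composition, $\oplus$ product of relations. Operational semantics: a state is a circuit with a value of $k$ in each register; initial state $c_0$ stores $0$ everywhere.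 Transitions $t\vdash c\xrightarrow[w]{v}c'$ at time $t\in\mathbb Z$: $\Delta$: $a/(a,a)$; $!$: $a/\bullet$; $+$: $(a,b)/a+b$; $0$: $\bullet/0$; $\mathsf s_r$: $a/ra$; $\mathsf x$ storing $b$: $a/b$, then stores $a$; $\mathbf 1$: $\bullet/1$ if $t=0$, $\bullet/0$ otherwise; mirrored generators: the same with left/right labels exchanged; $\mathrm{id}_1$: $a/a$; $\mathrm{sw}$: $(a,b)/(b,a)$; $\mathrm{id}_0$: $\bullet/\bullet$; in $c;d$ both components move at time $t$ agreeing on the shared middle label; in $c\oplus d$ both move at time $t$ with labels concatenated. A computation of $c$ starting at time $t\le0$ is a sequence of transitions $t\vdash c_0\to c_1$, $t+1\vdash c_1\to c_2,\dots$ from the initial state. For $c\in\mathsf{ACirc}[0,0]$, $c\uparrow$ means $c$ can perform an infinite computation. *)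

(* Defs.v *)
From HB Require Import structures.
From mathcomp Require Import all_boot all_order all_algebra.
From mathcomp Require Export fraction.
Set Implicit Arguments. Unset Strict Implicit. Unset Printing Implicit Defensive.
Import Order.TTheory GRing.Theory Num.Theory.
Local Open Scope ring_scope.

Section Circuits.
Variable k : fieldType.

Inductive gen : nat -> nat -> Type :=
| GCopy : gen 1 2
| GDisc : gen 1 0
| GAmp  : k -> gen 1 1
| GReg  : gen 1 1
| GAdd  : gen 2 1
| GZero : gen 0 1
| GOne  : gen 0 1.

Inductive circ : nat -> nat -> Type :=
| Gen   : forall n m, gen n m -> circ n m
| CoGen : forall n m, gen n m -> circ m n
| Id0   : circ 0 0
| Id1   : circ 1 1
| Sw    : circ 2 2
| Seq   : forall n m p, circ n m -> circ m p -> circ n p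
| Par   : forall n m n' m', circ n m -> circ n' m' -> circ (n + n') (m + m').

Definition Kx := {fraction {poly k}}.
Definition tofracK (p : {poly k}) : Kx := @FracField.tofrac _ p.
Definition xK : Kx := tofracK 'X.

Definition gden n m (g : gen n m) : 'rV[Kx]_n -> 'rV[Kx]_m -> Prop :=
  match g in gen n0 m0 return 'rV[Kx]_n0 -> 'rV[Kx]_m0 -> Prop with
  | GCopy => fun v w => w ord0 ord0 = v ord0 ord0 /\ w ord0 ord_max = v ord0 ord0
  | GDisc => fun _ _ => True
  | GAmp r => fun v w => w ord0 ord0 = tofracK r%:P * v ord0 ord0
  | GReg => fun v w => w ord0 ord0 = v ord0 ord0 * xK
  | GAdd => fun v w => w ord0 ord0 = v ord0 ord0 + v ord0 ord_max
  | GZero => fun _ w => w ord0 ord0 = 0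
  | GOne => fun _ w => w ord0 ord0 = 1
  end.

Fixpoint den n m (c : circ n m) : 'rV[Kx]_n -> 'rV[Kx]_m -> Prop :=
  match c in circ n0 m0 return 'rV[Kx]_n0 -> 'rV[Kx]_m0 -> Prop with
  | Gen _ _ g => fun v w => gden g v w
  | CoGen _ _ g => fun v w => gden g w v
  | Id0 => fun _ _ => True
  | Id1 => fun v w => w = v
  | Sw => fun v w => w ord0 ord0 = v ord0 ord_max /\ w ord0 ord_max = v ord0 ord0
  | Seq _ _ _ c d => fun v w => exists u, den c v u /\ den d u w
  | Par _ _ _ _ c d => fun v w =>
      den c (lsubmx v) (lsubmx w) /\ den d (rsubmx v) (rsubmx w)
  end.

Definition gstate n m (g : gen n m) : Type :=
  match g with GReg => k | _ => unit end.

Definition ginit n m (g : gen n m) : gstate g :=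
  match g as g0 return gstate g0 with GReg => 0 | _ => tt end.

Fixpoint state n m (c : circ n m) : Type :=
  match c with
  | Gen _ _ g => gstate g
  | CoGen _ _ g => gstate g
  | Seq _ _ _ c d => (state c * state d)%type
  | Par _ _ _ _ c d => (state c * state d)%type
  | _ => unit
  end.

Fixpoint init n m (c : circ n m) : state c :=
  match c as c0 return state c0 with
  | Gen _ _ g => ginit g
  | CoGen _ _ g => ginit g
  | Seq _ _ _ c d => (init c, init d)
  | Par _ _ _ _ c d => (init c, init d)
  | Id0 => tt | Id1 => tt | Sw => tt
  end.

(* gstep g t s s' v w : at time t, generator g in state s moves to s'
   with left label v and right label w. *)
Definition gstep n m (g : gen n m) (t : int) :
  gstate g -> gstate g -> 'rV[k]_n -> 'rV[k]_m -> Prop :=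
  match g as g0 in gen n0 m0
    return gstate g0 -> gstate g0 -> 'rV[k]_n0 -> 'rV[k]_m0 -> Prop with
  | GCopy => fun _ _ v w => w ord0 ord0 = v ord0 ord0 /\ w ord0 ord_max = v ord0 ord0
  | GDisc => fun _ _ _ _ => True
  | GAmp r => fun _ _ v w => w ord0 ord0 = r * v ord0 ord0
  | GReg => fun s s' v w => w ord0 ord0 = s /\ s' = v ord0 ord0
  | GAdd => fun _ _ v w => w ord0 ord0 = v ord0 ord0 + v ord0 ord_max
  | GZero => fun _ _ _ w => w ord0 ord0 = 0
  | GOne => fun _ _ _ w => w ord0 ord0 = (if t == 0 then 1 else 0)
  end.

Arguments gstep [n m] g t.

Fixpoint step n m (c : circ n m) (t : int) :
  state c -> state c -> 'rV[k]_n -> 'rV[k]_m -> Prop :=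
  match c as c0 in circ n0 m0
    return state c0 -> state c0 -> 'rV[k]_n0 -> 'rV[k]_m0 -> Prop with
  | Gen _ _ g => fun s s' v w => gstep g t s s' v w
  | CoGen _ _ g => fun s s' v w => gstep g t s s' w v
  | Id0 => fun _ _ _ _ => True
  | Id1 => fun _ _ v w => w = v
  | Sw => fun _ _ v w => w ord0 ord0 = v ord0 ord_max /\ w ord0 ord_max = v ord0 ord0
  | Seq _ _ _ c d => fun s s' v w =>
      exists u, @step _ _ c t s.1 s'.1 v u /\ @step _ _ d t s.2 s'.2 u w
  | Par _ _ _ _ c d => fun s s' v w =>
      @step _ _ c t s.1 s'.1 (lsubmx v) (lsubmx w) /\
      @step _ _ d t s.2 s'.2 (rsubmx v) (rsubmx w)
  end.

Arguments step [n m] c t.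

Definition infinite_computation n m (c : circ n m) (t : int)
    (sigma : nat -> state c) : Prop :=
  sigma 0%N = init c /\
  forall i : nat, exists v w, step c (t + i%:Z) (sigma i) (sigma i.+1) v w.

Arguments infinite_computation [n m] c t sigma.

(* c "up-arrow": c can perform an infinite computation (starting at some t <= 0). *)
Definition diverges n m (c : circ n m) : Prop :=
  exists (t : int) (sigma : nat -> state c), t <= 0 /\ infinite_computation c t sigma.

Arguments diverges [n m] c.

End Circuits.

(* Main.v *)
Require Import Defs.
From mathcomp Require Import all_boot all_order all_algebra.
From mathcomp Require Import boolp functions zify generic_quotient.
Set Implicit Arguments. Unset Strict Implicit. Unset Printing Implicit Defensive.
Import GRing.Theory.
Local Open Scope ring_scope.

Section Gen.
Variable k : fieldType.
Local Notation P := {poly k}.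

Lemma rV0_eq (V : zmodType) (x y : 'rV[V]_0) : x = y.
Proof. by rewrite (thinmx0 x) (thinmx0 y). Qed.

Lemma rV1P (V : Type) (x y : 'rV[V]_1) : x = y <-> x ord0 ord0 = y ord0 ord0.
Proof.
split=> [->//|H]; apply/matrixP => i j; by rewrite (ord1 i) (ord1 j).
Qed.

Lemma ord2_cases (j : 'I_2) : j = ord0 \/ j = ord_max.
Proof.
case: j => [[|[|//]]] Hj; [left|right]; exact: val_inj.
Qed.

Lemma rV2P (V : Type) (x y : 'rV[V]_2) :
  x = y <-> x ord0 ord0 = y ord0 ord0 /\ x ord0 ord_max = y ord0 ord_max.
Proof.
split=> [->//|[H1 H2]]; apply/matrixP => i j; rewrite (ord1 i).
by case: (ord2_cases j) => ->.
Qed.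

Lemma sum2 (V : zmodType) (F : 'I_2 -> V) : \sum_(i < 2) F i = F ord0 + F ord_max.
Proof.
rewrite big_ord_recr /= big_ord1; congr (F _ + _); exact: val_inj.
Qed.

Section Mod.
Variable V : zmodType.
Variable sc : P -> V -> V.
Hypothesis scD : forall p q x, sc (p + q) x = sc p x + sc q x.
Hypothesis scDr : forall p x y, sc p (x + y) = sc p x + sc p y.
Hypothesis sc1 : forall x, sc 1 x = x.
Variable o : V.

Lemma sc0 x : sc 0 x = 0.
Proof. by apply: (@addrI _ (sc 0 x)); rewrite -scD !addr0. Qed.

Lemma scr0 p : sc p 0 = 0.
Proof. by apply: (@addrI _ (sc p 0)); rewrite -scDr !addr0. Qed.

Lemma scN p x : sc (- p) x = - sc p x.
Proof. by apply/eqP; rewrite -addr_eq0 -scD addNr sc0. Qed.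

Definition gdenV n m (g : gen k n m) : 'rV[V]_n -> 'rV[V]_m -> Prop :=
  match g in gen _ n0 m0 return 'rV[V]_n0 -> 'rV[V]_m0 -> Prop with
  | GCopy => fun v w => w ord0 ord0 = v ord0 ord0 /\ w ord0 ord_max = v ord0 ord0
  | GDisc => fun _ _ => True
  | GAmp r => fun v w => w ord0 ord0 = sc r%:P (v ord0 ord0)
  | GReg => fun v w => w ord0 ord0 = sc 'X (v ord0 ord0)
  | GAdd => fun v w => w ord0 ord0 = v ord0 ord0 + v ord0 ord_max
  | GZero => fun _ w => w ord0 ord0 = 0
  | GOne => fun _ w => w ord0 ord0 = o
  end.

Fixpoint denV n m (c : circ k n m) : 'rV[V]_n -> 'rV[V]_m -> Prop :=
  match c in circ _ n0 m0 return 'rV[V]_n0 -> 'rV[V]_m0 -> Prop with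
  | Gen _ _ g => fun v w => gdenV g v w
  | CoGen _ _ g => fun v w => gdenV g w v
  | Id0 => fun _ _ => True
  | Id1 => fun v w => w = v
  | Sw => fun v w => w ord0 ord0 = v ord0 ord_max /\ w ord0 ord_max = v ord0 ord0
  | Seq _ _ _ c d => fun v w => exists u, denV c v u /\ denV d u w
  | Par _ _ _ _ c d => fun v w =>
      denV c (lsubmx v) (lsubmx w) /\ denV d (rsubmx v) (rsubmx w)
  end.

Definition mulvm a r (v : 'rV[V]_a) (A : 'M[P]_(a, r)) : 'rV[V]_r :=
  \row_j \sum_i sc (A i j) (v ord0 i).
Definition scv r (b : 'rV[P]_r) : 'rV[V]_r := \row_j sc (b ord0 j) o.

Definition sys n m q r (A : 'M[P]_(n,r)) (B : 'M[P]_(m,r)) (C : 'M[P]_(q,r))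
  (b : 'rV[P]_r) (v : 'rV[V]_n) (w : 'rV[V]_m) :=
  exists h : 'rV[V]_q, mulvm v A + mulvm w B + mulvm h C = scv b.

Lemma mulvm0 a r (v : 'rV[V]_a) : mulvm v (0 : 'M_(a, r)) = 0.
Proof. by apply/rowP => j; rewrite !mxE big1 // => i _; rewrite mxE sc0. Qed.

Lemma mulv0m a r (A : 'M[P]_(a, r)) : mulvm 0 A = 0.
Proof. by apply/rowP => j; rewrite !mxE big1 // => i _; rewrite mxE scr0. Qed.

Lemma mulvm_nil r (h : 'rV[V]_0) (C : 'M[P]_(0, r)) : mulvm h C = 0.
Proof. by apply/rowP => j; rewrite !mxE big_ord0. Qed.

Lemma mulvm_row a r1 r2 (v : 'rV[V]_a) (A1 : 'M[P]_(a, r1)) (A2 : 'M[P]_(a, r2)) :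
  mulvm v (row_mx A1 A2) = row_mx (mulvm v A1) (mulvm v A2).
Proof.
apply/rowP => j; rewrite -(fintype.splitK j); case: (fintype.split j) => j' /=;
  rewrite ?row_mxEl ?row_mxEr !mxE; apply: eq_bigr => i _;
  by rewrite ?row_mxEl ?row_mxEr.
Qed.

Lemma mulvm_col a1 a2 r (v1 : 'rV[V]_a1) (v2 : 'rV[V]_a2)
   (A1 : 'M[P]_(a1, r)) (A2 : 'M[P]_(a2, r)) :
  mulvm (row_mx v1 v2) (col_mx A1 A2) = mulvm v1 A1 + mulvm v2 A2.
Proof.
apply/rowP => j; rewrite !mxE big_split_ord /=; congr (_ + _);
  by apply: eq_bigr => i _; rewrite ?row_mxEl ?col_mxEu ?row_mxEr ?col_mxEd.
Qed.

Lemma mulvm1 a (v : 'rV[V]_a) : mulvm v 1%:M = v.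
Proof.
apply/rowP => j; rewrite mxE (bigD1 j) //= mxE eqxx mulr1n sc1 big1 ?addr0 //.
by move=> i /negbTE ne; rewrite mxE ne mulr0n sc0.
Qed.

Lemma scv_row r1 r2 (b1 : 'rV[P]_r1) (b2 : 'rV[P]_r2) :
  scv (row_mx b1 b2) = row_mx (scv b1) (scv b2).
Proof.
apply/rowP => j; rewrite -(fintype.splitK j); case: (fintype.split j) => j' /=;
  by rewrite [LHS]mxE ?row_mxEl ?row_mxEr mxE.
Qed.

Lemma mulvm_block a1 a2 r1 r2 (v : 'rV[V]_(a1 + a2))
   (A1 : 'M[P]_(a1, r1)) (A2 : 'M[P]_(a2, r2)) :
  mulvm v (block_mx A1 0 0 A2) = row_mx (mulvm (lsubmx v) A1) (mulvm (rsubmx v) A2).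
Proof.
rewrite -{1}(hsubmxK v) /block_mx mulvm_col !mulvm_row !mulvm0 add_row_mx.
by rewrite addr0 add0r.
Qed.

Definition genA n m (g : gen k n m) : 'M[P]_(n, m) :=
  match g in gen _ n0 m0 return 'M[P]_(n0, m0) with
  | GCopy => const_mx (-1) | GDisc => 0 | GAmp r => const_mx (- r%:P)
  | GReg => const_mx (- 'X) | GAdd => const_mx (-1) | GZero => 0 | GOne => 0
  end.
Definition genb n m (g : gen k n m) : 'rV[P]_m :=
  match g in gen _ n0 m0 return 'rV[P]_m0 with
  | GOne => const_mx 1 | _ => 0
  end.


Lemma gen_sys n m (g : gen k n m) v w :
  gdenV g v w <-> mulvm v (genA g) + mulvm w 1%:M = scv (genb g).
Proof.
rewrite mulvm1.
have E : forall (x y z : 'rV[V]_m), x + y = z <-> y = z - x.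
  by move=> x y z; split=> [<-|->]; [rewrite addrAC subrr add0r | rewrite addrC subrK].
rewrite E; case: g v w => [||r||||] /= v w;
  rewrite ?rV1P ?rV2P ?mxE ?big_ord1 ?sum2 ?big_ord0 ?mxE ?sc0 ?scN ?sc1 ?sub0r
     ?opprK ?subr0 ?opprD ?opprK ?oppr0;
  try by [].
- by split=> // _; apply: rV0_eq.
Qed.

Lemma sys_nil n m r (A : 'M[P]_(n,r)) (B : 'M[P]_(m,r)) (C : 'M[P]_(0,r)) b v w :
  sys A B C b v w <-> mulvm v A + mulvm w B = scv b.
Proof.
split=> [[h]|H]; last by exists 0; rewrite mulvm_nil addr0.
by rewrite mulvm_nil addr0.
Qed.

Lemma id1_sys (v w : 'rV[V]_1) :
  w = v <-> mulvm v (const_mx (-1)) + mulvm w 1%:M = scv 0.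
Proof.
rewrite mulvm1 !rV1P !mxE big_ord1 mxE scN sc1 sc0.
by split=> [->|H]; [rewrite addNr | apply/eqP; rewrite -subr_eq0 addrC H].
Qed.

Definition swA : 'M[P]_(2,2) := \matrix_(i, j) (if i == j then 0 else -1).

Lemma sw_sys (v w : 'rV[V]_2) :
  (w ord0 ord0 = v ord0 ord_max /\ w ord0 ord_max = v ord0 ord0) <->
  mulvm v swA + mulvm w 1%:M = scv 0.
Proof.
rewrite mulvm1.
have -> : scv (0 : 'rV[P]_2) = 0 by apply/rowP => j; rewrite !mxE sc0.
have Hz : forall x y : 'rV[V]_2, x + y = 0 <-> x = - y.
  by move=> x y; split=> [/eqP|->]; [rewrite addr_eq0 => /eqP | rewrite addNr].
rewrite addrC Hz rV2P !mxE !sum2 !mxE /= !scN !sc1 !sc0 add0r addr0.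
by rewrite !opprK.
Qed.

Lemma seq_eq n m p qc qd rc rd (Ac : 'M[P]_(n, rc)) (Bc : 'M[P]_(m, rc))
  (Cc : 'M[P]_(qc, rc)) (Ad : 'M[P]_(m, rd)) (Bd : 'M[P]_(p, rd))
  (Cd : 'M[P]_(qd, rd)) v w u hc hd :
  mulvm v (row_mx Ac 0) + mulvm w (row_mx 0 Bd) +
  mulvm (row_mx u (row_mx hc hd)) (col_mx (row_mx Bc Ad) (block_mx Cc 0 0 Cd))
  = row_mx (mulvm v Ac + mulvm u Bc + mulvm hc Cc)
           (mulvm u Ad + mulvm w Bd + mulvm hd Cd).
Proof.
rewrite !mulvm_row mulvm_col mulvm_row /block_mx mulvm_col !mulvm_row !mulvm0.
rewrite !add_row_mx; congr row_mx; rewrite ?addr0 ?add0r !addrA //.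
by rewrite (addrC (mulvm w Bd)).
Qed.

End Mod.

Definition scax (V : zmodType) (sc : P -> V -> V) :=
  [/\ (forall p q x, sc (p + q) x = sc p x + sc q x),
      (forall p x y, sc p (x + y) = sc p x + sc p y) &
      (forall x, sc 1 x = x)].

Definition presents n m (c : circ k n m) q r (A : 'M[P]_(n,r)) (B : 'M[P]_(m,r))
  (C : 'M[P]_(q,r)) (b : 'rV[P]_r) :=
  forall (V : zmodType) (sc : P -> V -> V) (o : V), scax sc ->
  forall v w, denV sc o c v w <-> sys sc o A B C b v w.

Lemma presentation n m (c : circ k n m) :
  exists q r A B C b, @presents n m c q r A B C b.
Proof.
elim: c.
- move=> n' m' g; exists 0%N, m', (genA g), 1%:M, 0, (genb g).
  move=> V sc o [scD scDr sc1] v w /=; rewrite sys_nil //; exact: gen_sys.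
- move=> n' m' g; exists 0%N, m', 1%:M, (genA g), 0, (genb g).
  move=> V sc o [scD scDr sc1] v w /=; rewrite sys_nil // addrC; exact: gen_sys.
- exists 0%N, 0%N, 0, 0, 0, 0.
  move=> V sc o [scD scDr sc1] v w /=; split=> // _; exists 0; exact: rV0_eq.
- exists 0%N, 1%N, (const_mx (-1)), 1%:M, 0, 0.
  move=> V sc o [scD scDr sc1] v w /=; rewrite sys_nil //; exact: id1_sys.
- exists 0%N, 2%N, swA, 1%:M, 0, 0.
  move=> V sc o [scD scDr sc1] v w /=; rewrite sys_nil //; exact: sw_sys.
- move=> n' m' p' c [qc [rc [Ac [Bc [Cc [bc Hc]]]]]]
     d [qd [rd [Ad [Bd [Cd [bd Hd]]]]]].
  exists (m' + (qc + qd))%N, (rc + rd)%N, (row_mx Ac 0), (row_mx 0 Bd),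
    (col_mx (row_mx Bc Ad) (block_mx Cc 0 0 Cd)), (row_mx bc bd).
  move=> V sc o scx v w /=; have [scD scDr sc1] := scx.
  split.
  + move=> [u [/(Hc V sc o scx) [hc Ehc] /(Hd V sc o scx) [hd Ehd]]].
    by exists (row_mx u (row_mx hc hd)); rewrite seq_eq // scv_row Ehc Ehd.
  + move=> [h Eh]; move: Eh.
    rewrite -(hsubmxK h) -(hsubmxK (rsubmx h)) seq_eq // scv_row.
    case/eq_row_mx => E1 E2; exists (lsubmx h); split.
    * by apply/(Hc V sc o scx); exists (lsubmx (rsubmx h)).
    * by apply/(Hd V sc o scx); exists (rsubmx (rsubmx h)).
- move=> n1 m1 n2 m2 c [qc [rc [Ac [Bc [Cc [bc Hc]]]]]]
     d [qd [rd [Ad [Bd [Cd [bd Hd]]]]]].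
  exists (qc + qd)%N, (rc + rd)%N, (block_mx Ac 0 0 Ad), (block_mx Bc 0 0 Bd),
    (block_mx Cc 0 0 Cd), (row_mx bc bd).
  move=> V sc o scx v w /=; have [scD scDr sc1] := scx.
  split.
  + move=> [/(Hc V sc o scx) [hc Ehc] /(Hd V sc o scx) [hd Ehd]].
    exists (row_mx hc hd).
    by rewrite !mulvm_block // !add_row_mx row_mxKl row_mxKr Ehc Ehd scv_row.
  + move=> [h]; rewrite !mulvm_block // !add_row_mx scv_row.
    case/eq_row_mx => E1 E2; split.
    * by apply/(Hc V sc o scx); exists (lsubmx h).
    * by apply/(Hd V sc o scx); exists (rsubmx h).
Qed.

End Gen.

Section Ser.
Variable k : fieldType.
Local Notation P := {poly k}.

Definition ser := nat -> k.
Definition trunc (n : nat) (s : ser) : P := \poly_(i < n.+1) s i.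
Definition scS (p : P) (s : ser) : ser := fun n => \sum_(j < n.+1) p`_j * s (n - j)%N.

Lemma coefM_ext (p a b : P) n : (forall i, (i <= n)%N -> a`_i = b`_i) ->
  (p * a)`_n = (p * b)`_n.
Proof. by move=> H; rewrite !coefM; apply: eq_bigr => j _; rewrite H // leq_subr. Qed.

Lemma convP p s n : scS p s n = (p * trunc n s)`_n.
Proof.
rewrite coefM; apply: eq_bigr => j _; by rewrite coef_poly ltnS leq_subr.
Qed.

Lemma scS_ax : scax scS.
Proof.
split.
- move=> p q x; apply: funext => n /=.
  transitivity (scS p x n + scS q x n); last by [].
  rewrite /scS -big_split /=.
  by apply: eq_bigr => j _; rewrite coefD mulrDl.
- move=> p x y; apply: funext => n /=.
  transitivity (scS p x n + scS p y n); last by [].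
  rewrite /scS -big_split /=.
  by apply: eq_bigr => j _; rewrite mulrDr.
- move=> x; apply: funext => n; rewrite /scS big_ord_recl coef1 /= mul1r subn0.
  by rewrite big1 ?addr0 // => i _; rewrite coef1 /= mul0r.
Qed.

Lemma scSM p q s : scS (p * q) s = scS p (scS q s).
Proof.
apply: funext => n; rewrite !convP -mulrA; apply: coefM_ext => i Hi.
rewrite /trunc coef_poly ltnS Hi convP; apply: coefM_ext => j Hj.
rewrite !coef_poly !ltnS Hj (leq_trans Hj Hi) //.
Qed.

Lemma scSC c s n : scS c%:P s n = c * s n.
Proof. by rewrite convP coefCM coef_poly ltnSn. Qed.

Lemma scSX s n : scS 'X s n = if n is n'.+1 then s n' else 0.
Proof. by rewrite convP coefXM; case: n => // n'; rewrite coef_poly /= ltnS leqnSn. Qed.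

Definition delta (N : nat) : ser := fun n => (n == N)%:R.

Lemma scS_Xn N : scS ('X^N) (delta 0) = delta N.
Proof.
apply: funext => n; rewrite convP.
have -> : trunc n (delta 0) = 1.
  apply/polyP => i; rewrite coef_poly coef1 /delta.
  by case: ltnP => // Hi; case: eqP => // E; rewrite E in Hi.
by rewrite mulr1 coefXn.
Qed.

Lemma scS_delta_nz (d : P) N : d != 0 -> scS d (delta N) != 0.
Proof.
move=> dn0.
have [j Hj] : exists j, d`_j != 0.
  by exists (size d).-1; rewrite -lead_coefE lead_coef_eq0.
apply/negP => /eqP E; move: (congr1 (fun f => f (N + j)%N) E) => /=.
rewrite /scS (bigD1 (Ordinal (leq_addl N j : (j < (N + j).+1)%N))) //= addnK.
rewrite /delta eqxx mulr1 big1 ?addr0; first by move=> Ej; rewrite Ej eqxx in Hj.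
move=> i /eqP Hi; rewrite /delta.
case: eqP => [E2|]; last by rewrite mulr0.
by exfalso; apply: Hi; apply: val_inj => /=; move: (ltn_ord i) E2; rewrite ltnS; lia.
Qed.

End Ser.
Arguments delta {k}.
Arguments trunc {k}.

Section Inv.
Variable k : fieldType.
Local Notation P := {poly k}.

Lemma factorX n (D : P) : (size D <= n)%N -> D != 0 ->
  exists N D0, D = 'X^N * D0 /\ D0`_0 != 0.
Proof.
elim: n D => [|n IH] D.
  by rewrite leqn0 size_poly_eq0 => /eqP ->; rewrite eqxx.
move=> Hs Dn0; case: (eqVneq (D`_0) 0) => H0; last by exists 0%N, D; rewrite expr0 mul1r.
have HT : take_poly 1 D = 0.
  by apply/polyP => i; rewrite coef_take_poly coef0; case: i => //.
have ED : D = drop_poly 1 D * 'X by rewrite -{1}(poly_take_drop 1 D) HT add0r expr1.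
have D'n0 : drop_poly 1 D != 0 by apply: contraNneq Dn0 => E; rewrite ED E mul0r.
have [|N [D0 [E1 E2]]] := IH (drop_poly 1 D) _ D'n0.
  by rewrite size_drop_poly leq_subLR add1n.
by exists N.+1, D0; rewrite ED E1 exprSr -!mulrA (mulrC D0).
Qed.

Variable D0 : P.
Hypothesis D00 : D0`_0 != 0.

Fixpoint Eaux (n : nat) : seq k :=
  match n with
  | 0 => [:: (D0`_0)^-1]
  | n'.+1 => let s := Eaux n' in
     rcons s (- (\sum_(i < n'.+1) D0`_(i.+1) * nth 0 s (n' - i)%N) / D0`_0)
  end.

Lemma size_Eaux n : size (Eaux n) = n.+1.
Proof. by elim: n => //= n IH; rewrite size_rcons IH. Qed.

Definition Einv : ser k := fun n => nth 0 (Eaux n) n.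

Lemma Eaux_prefix n i : (i <= n)%N -> nth 0 (Eaux n) i = Einv i.
Proof.
elim: n => [|n IH]; first by rewrite leqn0 => /eqP ->.
rewrite leq_eqVlt => /orP [/eqP -> //|Hi].
by rewrite /= nth_rcons size_Eaux Hi IH.
Qed.

Lemma Einv_spec : scS D0 Einv = delta 0.
Proof.
apply: funext => n; rewrite /scS /delta.
case: n => [|n].
  by rewrite big_ord1 /Einv /= mulfV.
rewrite big_ord_recl /= subn0.
have -> : Einv n.+1 = - (\sum_(i < n.+1) D0`_(i.+1) * Einv (n - i)%N) / D0`_0.
  rewrite /Einv /= nth_rcons size_Eaux ltnn eqxx; congr (- _ / _).
  by apply: eq_bigr => i _; rewrite Eaux_prefix // leq_subr.
rewrite mulrC -mulrA mulVf // mulr1 addrC.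
have -> : \sum_(i < n.+1) D0`_(bump 0 i) * Einv (n.+1 - bump 0 i)%N
        = \sum_(i < n.+1) D0`_(i.+1) * Einv (n - i)%N by [].
by rewrite subrr.
Qed.

End Inv.

Section Run.
Variable k : fieldType.

Definition unser n (v : 'rV[ser k]_n) : nat -> 'rV[k]_n := fun i => \row_j v ord0 j i.
Definition serv n (V : nat -> 'rV[k]_n) : 'rV[ser k]_n := \row_j (fun i => V i ord0 j).

Lemma servK n (V : nat -> 'rV[k]_n) : unser (serv V) = V.
Proof. by apply: funext => i; apply/rowP => j; rewrite !mxE (ord1 ord0). Qed.

Lemma unserK n (v : 'rV[ser k]_n) : serv (unser v) = v.
Proof. by apply/rowP => j; rewrite !mxE; apply: funext => i; rewrite mxE. Qed.

Definition tm (N i : nat) : int := - (N%:Z) + i%:Z.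

Lemma tm0 N i : (tm N i == 0) = (i == N).
Proof. by rewrite /tm addrC subr_eq0 eqz_nat. Qed.

Lemma gen_run N n m (g : gen k n m) v w :
  (exists sigma : nat -> gstate g, sigma 0%N = ginit g /\
     forall i, @gstep k n m g (tm N i) (sigma i) (sigma i.+1) (unser v i) (unser w i))
  <-> gdenV (@scS k) (delta N) g v w.
Proof.
case: g v w => [||r||||] v w /=.
- split=> [[_ [_ H]]|[H1 H2]].
    by split; apply: funext => i; case: (H i); rewrite !mxE.
  by exists (fun _ => tt); split=> // i; rewrite !mxE H1 H2.
- by split=> // _; exists (fun _ => tt).
- split=> [[_ [_ H]]|H1].
    by apply: funext => i; move: (H i); rewrite !mxE scSC.
  by exists (fun _ => tt); split=> // i; rewrite !mxE H1 scSC.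
- split=> [[s [s0 H]]|H1].
    apply: funext => i; rewrite scSX; case: i => [|i].
      by case: (H 0%N); rewrite !mxE s0.
    by case: (H i.+1); case: (H i); rewrite !mxE => _ -> -> .
  exists (fun i => w ord0 ord0 i); split.
    by rewrite H1 scSX.
  by move=> i; rewrite !mxE; split => //; rewrite H1 scSX.
- split=> [[_ [_ H]]|H1].
    by apply: funext => i; move: (H i); rewrite !mxE.
  by exists (fun _ => tt); split=> // i; rewrite !mxE H1.
- split=> [[_ [_ H]]|H1].
    by apply: funext => i; move: (H i); rewrite !mxE.
  by exists (fun _ => tt); split=> // i; rewrite !mxE H1.
- split=> [[_ [_ H]]|H1].
    by apply: funext => i; move: (H i); rewrite !mxE tm0 /delta; case: (i == N).
  by exists (fun _ => tt); split=> // i; rewrite !mxE H1 tm0 /delta; case: (i == N).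
Qed.

End Run.

Section Run2.
Variable k : fieldType.

Definition run n m (c : circ k n m) N (V : nat -> 'rV[k]_n) (W : nat -> 'rV[k]_m) :=
  exists sigma : nat -> state c, sigma 0%N = init c /\
    forall i, @step k n m c (tm N i) (sigma i) (sigma i.+1) (V i) (W i).

Lemma unser_l n1 n2 (v : 'rV[ser k]_(n1 + n2)) i :
  lsubmx (unser v i) = unser (lsubmx v) i.
Proof. by apply/rowP => j; rewrite !mxE. Qed.

Lemma unser_r n1 n2 (v : 'rV[ser k]_(n1 + n2)) i :
  rsubmx (unser v i) = unser (rsubmx v) i.
Proof. by apply/rowP => j; rewrite !mxE. Qed.

Lemma run_den n m (c : circ k n m) N : forall v w,
  run c N (unser v) (unser w) <-> denV (@scS k) (delta N) c v w.
Proof.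
elim: c => /=.
- move=> n' m' g v w; exact: gen_run.
- move=> n' m' g v w; exact: gen_run.
- by move=> v w; split=> // _; exists (fun _ => tt).
- move=> v w; split=> [[s [_ H]]|->].
    by rewrite -(unserK w) -(unserK v); congr serv; apply: funext.
  by exists (fun _ => tt).
- move=> v w; split=> [[s [_ H]]|[H1 H2]].
    by split; apply: funext => i; case: (H i); rewrite /unser !mxE.
  by exists (fun _ => tt); split=> // i; rewrite /= /unser !mxE H1 H2.
- move=> n' m' p' c IHc d IHd v w; split.
  + move=> [s [s0 H]].
    have [U HU] := choice H.
    exists (serv U); split.
      apply/IHc; exists (fun i => (s i).1); rewrite s0 servK; split=> // i.
      by case: (HU i).
    apply/IHd; exists (fun i => (s i).2); rewrite s0 servK; split=> // i.
    by case: (HU i).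
  + move=> [u [/IHc [sc [sc0 Hc]] /IHd [sd [sd0 Hd]]]].
    exists (fun i => (sc i, sd i)); rewrite sc0 sd0; split=> // i.
    by exists (unser u i); split.
- move=> n1 m1 n2 m2 c IHc d IHd v w; split.
  + move=> [s [s0 H]]; split.
      apply/IHc; exists (fun i => (s i).1); rewrite s0; split=> // i.
      by case: (H i); rewrite -!unser_l.
    apply/IHd; exists (fun i => (s i).2); rewrite s0; split=> // i.
    by case: (H i); rewrite -!unser_r.
  + move=> [/IHc [sc [sc0 Hc]] /IHd [sd [sd0 Hd]]].
    exists (fun i => (sc i, sd i)); rewrite sc0 sd0; split=> // i.
    by rewrite /= !unser_l !unser_r; split.
Qed.

End Run2.

Section FR.
Import FracField.
Lemma frac_repr (R : idomainType) (x : {fraction R}) :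
  exists n d, d != 0 /\ x * (FracField.tofrac d) = FracField.tofrac n.
Proof.
elim/quotW: x => x.
exists \n_x, \d_x; split; first exact: denom_ratioP.
unlock FracField.tofrac.
transitivity ((\pi_({fraction R}) (mulf x (Ratio \d_x 1)))%qT).
  exact: (esym (pi_mul _ _)).
apply/eqmodP; rewrite /= equivfE /mulf.
rewrite !numden_Ratio ?mulr1 ?oner_neq0 ?mulf_neq0 ?denom_ratioP //.
by rewrite mulrC.
Qed.
End FR.

Section Final.
Variable k : fieldType.
Local Notation P := {poly k}.
Local Notation K := (Kx k).
Local Notation tf := (@tofracK k).

Definition scK (p : P) (f : K) : K := tf p * f.

Lemma scK_ax : scax scK.
Proof.
split=> [p q x|p x y|x]; rewrite /scK /tofracK.
- by rewrite rmorphD mulrDl.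
- by rewrite mulrDr.
- by rewrite rmorph1 mul1r.
Qed.

Lemma tofracK_inj (p q : P) : tf p = tf q -> p = q.
Proof. by move=> E; apply/eqP; rewrite -tofrac_eq; apply/eqP. Qed.

Lemma den_K n m (c : circ k n m) : forall v w,
  den c v w <-> denV scK 1 c v w.
Proof.
elim: c => /=.
- by move=> n' m' g v w; case: g v w => //= v w; rewrite /scK mulrC.
- by move=> n' m' g v w; case: g v w => //= v w; rewrite /scK mulrC.
- by [].
- by [].
- by [].
- move=> n' m' p' c IHc d IHd v w; split=> [[u [/IHc H1 /IHd H2]]|[u [/IHc H1 /IHd H2]]];
  by exists u.
- move=> n1 m1 n2 m2 c IHc d IHd v w.
  by split=> [[/IHc H1 /IHd H2]|[/IHc H1 /IHd H2]].
Qed.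

Section Sums.
Variable V : zmodType.
Variable sc : P -> V -> V.
Hypothesis scx : scax sc.

Lemma sc_suml I (r : seq I) (Pr : pred I) (F : I -> P) x :
  sc (\sum_(i <- r | Pr i) F i) x = \sum_(i <- r | Pr i) sc (F i) x.
Proof.
have [scD scDr sc1] := scx.
by apply: (big_morph (fun p => sc p x)) => [p q|]; [apply: scD | apply: sc0].
Qed.

Lemma sc_sumr I (r : seq I) (Pr : pred I) (F : I -> V) p :
  sc p (\sum_(i <- r | Pr i) F i) = \sum_(i <- r | Pr i) sc p (F i).
Proof.
have [scD scDr sc1] := scx.
by apply: (big_morph (sc p)) => [x y|]; [apply: scDr | apply: scr0].
Qed.
End Sums.

Lemma tofracK_sum I (r : seq I) (Pr : pred I) (F : I -> P) :
  tf (\sum_(i <- r | Pr i) F i) = \sum_(i <- r | Pr i) tf (F i).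
Proof. by rewrite /tofracK rmorph_sum. Qed.

Lemma tofracKM p q : tf (p * q) = tf p * tf q.
Proof. by rewrite /tofracK rmorphM. Qed.

Lemma clear_den q (f : 'I_q -> K) :
  exists (D : P) (g : 'I_q -> P), D != 0 /\ forall j, tf (g j) = f j * tf D.
Proof.
have H : forall j, exists nd : P * P, nd.2 != 0 /\ f j * tf nd.2 = tf nd.1.
  by move=> j; have [n [d [dn0 E]]] := frac_repr (f j); exists (n, d).
have [nd Hnd] := fin_all_exists H.
exists (\prod_j (nd j).2), (fun j => (nd j).1 * \prod_(l | l != j) (nd l).2).
split.
  by rewrite prodf_seq_neq0; apply/allP => j _; case: (Hnd j).
move=> j; rewrite [in RHS](bigD1 j) //= !tofracKM mulrA.
by case: (Hnd j) => _ ->.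
Qed.

End Final.

Section Core.
Variable k : fieldType.
Local Notation P := {poly k}.
Local Notation K := (Kx k).
Local Notation tf := (@tofracK k).

Lemma K_to_S q r (C : 'M[P]_(q, r)) (b : 'rV[P]_r) :
  (exists h : 'rV[K]_q, mulvm (@scK k) h C = scv (@scK k) 1 b) ->
  exists N (hS : 'rV[ser k]_q), mulvm (@scS k) hS C = scv (@scS k) (delta N) b.
Proof.
move=> [h Eh].
have [D [g [Dn0 Hg]]] := clear_den (fun j => h ord0 j).
have Epoly : forall l, \sum_j C j l * g j = D * b ord0 l.
  move=> l; apply: tofracK_inj.
  move/rowP: Eh => /(_ l); rewrite !mxE => Ehl.
  rewrite tofracK_sum tofracKM.
  transitivity (tf D * \sum_j scK (C j l) (h ord0 j)).
    rewrite mulr_sumr; apply: eq_bigr => j _.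
    by rewrite tofracKM Hg /scK mulrA mulrC.
  rewrite Ehl /scK mulr1. reflexivity.
have [N [D0 [ED D00]]] := factorX (leqnn (size D)) Dn0.
exists N, (\row_j scS (g j) (Einv D0)).
apply/rowP => l; rewrite [RHS]mxE [LHS]mxE.
transitivity (scS (\sum_j C j l * g j) (Einv D0)).
  rewrite (sc_suml (@scS_ax k)); apply: eq_bigr => j _.
  by rewrite mxE scSM.
rewrite Epoly ED mulrC scSM scSM Einv_spec //.
by rewrite scS_Xn.
Qed.

Lemma mulvmK q r (h : 'rV[K]_q) (C : 'M[P]_(q, r)) :
  mulvm (@scK k) h C = h *m map_mx tf C.
Proof.
by apply/rowP => j; rewrite !mxE; apply: eq_bigr => i _; rewrite mxE /scK mulrC.
Qed.

Lemma scvK r (b : 'rV[P]_r) : scv (@scK k) 1 b = map_mx tf b.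
Proof. by apply/rowP => j; rewrite !mxE /scK mulr1. Qed.

Lemma S_to_K q r (C : 'M[P]_(q, r)) (b : 'rV[P]_r) N (hS : 'rV[ser k]_q) :
  mulvm (@scS k) hS C = scv (@scS k) (delta N) b ->
  exists h : 'rV[K]_q, mulvm (@scK k) h C = scv (@scK k) 1 b.
Proof.
move=> EhS.
case: (boolP (map_mx tf b <= map_mx tf C)%MS) => Hsub.
  move/submxP: Hsub => [Dm EDm].
  by exists Dm; rewrite mulvmK scvK EDm.
exfalso.
have [Y [HC Hb]] : exists Y : 'M[K]_r,
    map_mx tf C *m Y = 0 /\ map_mx tf b *m Y != 0.
  by exists (cokermx (map_mx tf C)); rewrite mulmx_coker -submxE.
have [l Hl] : exists l, (map_mx tf b *m Y) ord0 l != 0.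
  case: (pickP (fun l => (map_mx tf b *m Y) ord0 l != 0)) => [l Hl|H0].
    by exists l.
  case/negP: Hb; apply/eqP/rowP => l; rewrite [RHS]mxE.
  by move: (H0 l) => /= /negbFE/eqP.
have [D [g [Dn0 Hg]]] := clear_den (fun i => Y i l).
have HCg : forall j, \sum_i C j i * g i = 0.
  move=> j; apply: tofracK_inj; rewrite tofracK_sum.
  transitivity ((map_mx tf C *m Y) j l * tf D).
    rewrite mxE mulr_suml; apply: eq_bigr => i _.
    by rewrite tofracKM Hg mxE mulrA.
  by rewrite HC mxE mul0r /tofracK rmorph0.
have Hd : \sum_i b ord0 i * g i != 0.
  rewrite -tofrac_eq0; change (tf (\sum_i b ord0 i * g i) != 0).
  rewrite tofracK_sum.
  have -> : \sum_i tf (b ord0 i * g i) = (map_mx tf b *m Y) ord0 l * tf D.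
    rewrite mxE mulr_suml; apply: eq_bigr => i _.
    by rewrite tofracKM Hg mxE mulrA.
  apply: mulf_neq0; first exact: Hl.
  by rewrite /tofracK tofrac_eq0.
set S := \sum_i scS (g i) ((mulvm (@scS k) hS C) ord0 i).
have [scD scDr sc1] := scS_ax k.
have S0 : S = 0.
  rewrite /S.
  transitivity (\sum_i \sum_j scS (g i * C j i) (hS ord0 j)).
    apply: eq_bigr => i _; rewrite mxE (sc_sumr (@scS_ax k)).
    by apply: eq_bigr => j _; rewrite scSM.
  rewrite exchange_big /=.
  apply: big1 => j _; rewrite -(sc_suml (@scS_ax k)).
  have -> : \sum_i g i * C j i = 0.
    by rewrite -[RHS](HCg j); apply: eq_bigr => i _; rewrite mulrC.
  exact: sc0.
have S1 : S = scS (\sum_i b ord0 i * g i) (delta N).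
  rewrite /S EhS (sc_suml (@scS_ax k)); apply: eq_bigr => i _.
  by rewrite mxE -scSM mulrC.
by move: (scS_delta_nz N Hd); rewrite -S1 S0 eqxx.
Qed.

End Core.

Theorem proposition5 (k : fieldType) (c : circ k 0 0) :
  (forall u v : 'rV[Kx k]_0, den c u v <-> u = v) <-> diverges c.
Proof.
have [q [r [A [B [C [b Hp]]]]]] := presentation c.
have HK : den c 0 0 <->
    exists h : 'rV[Kx k]_q, mulvm (@scK k) h C = scv (@scK k) 1 b.
  have [scD scDr sc1] := scK_ax k.
  rewrite den_K (Hp _ _ _ (scK_ax k)) /sys.
  split=> [[h Eh]|[h Eh]]; exists h; move: Eh;
    by rewrite !mulv0m // !add0r.
have HS : forall N, denV (@scS k) (delta N) c 0 0 <->
    exists hS, mulvm (@scS k) hS C = scv (@scS k) (delta N) b.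
  move=> N; have [scD scDr sc1] := scS_ax k.
  rewrite (Hp _ _ _ (scS_ax k)) /sys.
  split=> [[h Eh]|[h Eh]]; exists h; move: Eh;
    by rewrite !mulv0m // !add0r.
have Hdiv : diverges c <-> exists N, denV (@scS k) (delta N) c 0 0.
  split.
  - move=> [t [s [Ht [s0 Hs]]]].
    have [N EN] : exists N : nat, t = - (N%:Z).
      case: t Ht {Hs} => [n|n] Ht.
        by exists 0%N; move: Ht; rewrite lez_nat leqn0 => /eqP ->.
      by exists n.+1; rewrite NegzE.
    exists N; apply/run_den; exists s; split=> // i.
    have [v [w H]] := Hs i.
    rewrite /tm -EN {1}(rV0_eq (unser 0 i) v) (rV0_eq (unser 0 i) w); exact: H.
  - move=> [N /run_den [s [s0 Hs]]].
    exists (- (N%:Z)), s; split; first by case: N {Hs s0}.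
    by split=> // i; exists (unser 0 i), (unser 0 i); exact: (Hs i).
split.
- move=> H; have H0 : den c 0 0 by apply/H.
  have [N [hS E]] := K_to_S (HK.1 H0).
  by apply/Hdiv; exists N; apply/HS; exists hS.
- move=> /Hdiv [N /HS [hS E]] u v.
  have H0 : den c 0 0 by apply/HK; exact: (S_to_K E).
  split=> _; first exact: rV0_eq.
  by rewrite (rV0_eq u 0) (rV0_eq v 0).
Qed.
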